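(* Let $T$ be a $K$-torus with minimal splitting field $L$, and let $0\to P\to Q\to T\to0$ be the canonical resolution, where $Q=R_{L/K}(T_L)/R^{(1)}_{L/K}(T_L)_{(u)}$ and $P=R^{(1)}_{L/K}(T_L)^{(m)}$. Then: (a) $H^1(I,X^*(Q))=0$; (b) the resolution induces an exact sequence of $\Gamma_k$-modules $0\to X_*(P)\to X_*(Q)_I\to X_*(T)_I\to0$ (where $X_*(P)=X_*(P)_I$ since $I$ acts trivially on $X_*(P)$).
   Context: $A$ is a complete discrete valuation ring with fraction field $K$ and perfect residue field $k$; $\mathcal G$ the absolute Galois group of $K$, $I$ its inertia subgroup, $\Gamma_k=\mathcal G/I$; $M_I$ denotes $I$-coinvariants. For a $K$-torus $T'$: $X^*(T')$, $X_*(T')$ its character and cocharacter modules; $T'^{(m)}$ is the $K$-torus with character module $X^*(T')^I$ (maximal quotient torus with multiplicative reduction) and $T'_{(u)}$ is the $K$-torus with character module $X^*(T')/X^*(T')^I$ (maximal subtorus with unipotent reduction), giving $0\to T'_{(u)}\to T'\to T'^{(m)}\to0$. $R_{L/K}$ is Weil restriction; $R^{(1)}_{L/K}(T_L)$ is the kernel of the norm epimorphism $R_{L/K}(T_L)\to T$. The map $P\to Q$ is induced by the inclusion $R^{(1)}_{L/K}(T_L)\hookrightarrow R_{L/K}(T_L)$ (pushout along $R^{(1)}_{L/K}(T_L)\to P$), and $Q\to T$ by the norm. *)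

(* Defs.v *)
(* K-tori are encoded through their character modules
   (anti-equivalence of K-tori with Galois lattices). *)
From HB Require Import structures.
From mathcomp Require Import all_boot all_order all_algebra all_fingroup.
Set Implicit Arguments. Unset Strict Implicit. Unset Printing Implicit Defensive.
Import GRing.Theory Num.Theory.
Local Open Scope ring_scope.

Section Generic.
Variables (gT : finGroupType) (V : zmodType).

Definition crossed_hom (I : {group gT}) (act : gT -> V -> V) (S : V -> Prop)
    (c : gT -> V) : Prop :=
  (forall g, g \in I -> S (c g)) /\
  (forall g h, g \in I -> h \in I -> c (g * h)%g = c g + act g (c h)).

Definition H1_vanishes (I : {group gT}) (act : gT -> V -> V) (S : V -> Prop) :=
  forall c, crossed_hom I act S c ->
    exists m, S m /\ forall g, g \in I -> c g = act g m - m.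

(* Elements of the dual lattice Hom_Z(S, Z), represented by any function
   V -> int which is additive on S (only its values on S matter). *)
Definition dual_on (S : V -> Prop) (phi : V -> int) : Prop :=
  forall a b, S a -> S b -> phi (a + b) = phi a + phi b.

Definition dact (act : gT -> V -> V) (g : gT) (phi : V -> int) : V -> int :=
  fun v => phi (act g^-1%g v).

Definition eq_on (S : V -> Prop) (phi psi : V -> int) : Prop :=
  forall v, S v -> phi v = psi v.

(* phi vanishes in the I-coinvariants of the dual Hom_Z(S,Z): phi lies in the
   span of the elements g.phi_i - phi_i with g \in I. *)
Definition coinv_zero (I : {group gT}) (act : gT -> V -> V) (S : V -> Prop)
    (phi : V -> int) : Prop :=
  exists (k : nat) (gs : nat -> gT) (phis : nat -> V -> int),
    (forall i, (i < k)%N -> gs i \in I /\ dual_on S (phis i)) /\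
    (forall v, S v ->
       phi v = \sum_(i < k) (dact act (gs i) (phis i) v - phis i v)).

End Generic.

Section Tori.
Variables (gT : finGroupType) (n : nat).
Local Notation X := 'rV[int]_n.

(* Character module of R_{L/K}(T_L): functions G -> X, (g.f)(h) = f(h g). *)
Definition IndX := {ffun gT -> X}.

Definition indAct (g : gT) (f : IndX) : IndX := [ffun h => f (h * g)%g].

(* Character map X*(T) -> X*(R_{L/K}(T_L)) dual to the norm. *)
Definition jX (actX : gT -> X -> X) (x : X) : IndX := [ffun h => actX h x].

(* Character module of Q = R_{L/K}(T_L) / R^(1)_{L/K}(T_L)_(u): the preimage
   in X*(R) of the I-invariants of X*(R^(1)) = X*(R) / jX(X). *)
Definition XQ (actX : gT -> X -> X) (I : {group gT}) (f : IndX) : Prop :=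
  forall g, g \in I -> exists x, indAct g f - f = jX actX x.

(* Cocharacters of P = R^(1)_{L/K}(T_L)^(m): Hom_Z(X*(Q)/jX(X), Z), seen in
   Hom_Z(X*(Q), Z) as the maps killing jX(X). *)
Definition XP_dual (actX : gT -> X -> X) (I : {group gT}) (psi : IndX -> int) :=
  dual_on (XQ actX I) psi /\ forall x, psi (jX actX x) = 0.

(* Cocharacter map X_*(Q) -> X_*(T) induced by the norm Q -> T. *)
Definition toXT (actX : gT -> X -> X) (phi : IndX -> int) : X -> int :=
  fun x => phi (jX actX x).

End Tori.

(* Main.v *)
Require Import Defs.
From HB Require Import structures.
From mathcomp Require Import all_boot all_order all_algebra all_fingroup.
Import GRing.Theory Num.Theory.
Local Open Scope ring_scope.



Lemma indActD (gT : finGroupType) n g (f f' : IndX gT n) :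
  indAct g (f + f') = indAct g f + indAct g f'.
Proof. by apply/ffunP => h; rewrite !ffunE. Qed.

Lemma indAct0 (gT : finGroupType) n g : indAct g (0 : IndX gT n) = 0.
Proof. by apply/ffunP => h; rewrite !ffunE. Qed.

Lemma indActN (gT : finGroupType) n g (f : IndX gT n) :
  indAct g (- f) = - indAct g f.
Proof. by apply/ffunP => h; rewrite !ffunE. Qed.

Lemma indActB (gT : finGroupType) n g (f f' : IndX gT n) :
  indAct g (f - f') = indAct g f - indAct g f'.
Proof. by rewrite indActD indActN. Qed.

Lemma indActMn (gT : finGroupType) n g (f : IndX gT n) k :
  indAct g (f *+ k) = indAct g f *+ k.
Proof. by elim: k => [|k IH]; rewrite ?mulr0n ?indAct0 // !mulrS indActD IH. Qed.

Lemma indAct1 (gT : finGroupType) n (f : IndX gT n) : indAct 1%g f = f.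
Proof. by apply/ffunP => h; rewrite !ffunE mulg1. Qed.

Lemma indActM (gT : finGroupType) n g h (f : IndX gT n) :
  indAct (g * h)%g f = indAct g (indAct h f).
Proof. by apply/ffunP => k; rewrite !ffunE mulgA. Qed.

Lemma indAct_sum (gT : finGroupType) n g (I : finType) (P : pred I) (F : I -> IndX gT n) :
  indAct g (\sum_(i | P i) F i) = \sum_(i | P i) indAct g (F i).
Proof. by apply: big_morph; [exact: indActD | exact: indAct0]. Qed.

Lemma jXD (gT : finGroupType) n (actX : gT -> 'rV[int]_n -> 'rV[int]_n)
  (Hadd : forall g x y, actX g (x + y) = actX g x + actX g y) x y :
  jX actX (x + y) = jX actX x + jX actX y.
Proof. by apply/ffunP => h; rewrite !ffunE Hadd. Qed.

Lemma act0 (gT : finGroupType) n (actX : gT -> 'rV[int]_n -> 'rV[int]_n)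
  (Hadd : forall g x y, actX g (x + y) = actX g x + actX g y) g :
  actX g 0 = 0.
Proof. have h := Hadd g 0 0; rewrite addr0 in h; apply: (addrI (actX g 0)); by rewrite addr0 -h. Qed.

Lemma actN (gT : finGroupType) n (actX : gT -> 'rV[int]_n -> 'rV[int]_n)
  (Hadd : forall g x y, actX g (x + y) = actX g x + actX g y) g x :
  actX g (- x) = - actX g x.
Proof. by apply/eqP; rewrite -subr_eq0 opprK -Hadd addNr act0. Qed.

Lemma actMn (gT : finGroupType) n (actX : gT -> 'rV[int]_n -> 'rV[int]_n)
  (Hadd : forall g x y, actX g (x + y) = actX g x + actX g y) g x k :
  actX g (x *+ k) = actX g x *+ k.
Proof. by elim: k => [|k IH]; rewrite ?mulr0n ?act0 // !mulrS Hadd IH. Qed.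

Lemma jX0 (gT : finGroupType) n (actX : gT -> 'rV[int]_n -> 'rV[int]_n)
  (Hadd : forall g x y, actX g (x + y) = actX g x + actX g y) :
  jX actX 0 = 0.
Proof. by apply/ffunP => h; rewrite !ffunE act0. Qed.

Lemma jXN (gT : finGroupType) n (actX : gT -> 'rV[int]_n -> 'rV[int]_n)
  (Hadd : forall g x y, actX g (x + y) = actX g x + actX g y) x :
  jX actX (- x) = - jX actX x.
Proof. by apply/ffunP => h; rewrite !ffunE actN. Qed.

Lemma jXMn (gT : finGroupType) n (actX : gT -> 'rV[int]_n -> 'rV[int]_n)
  (Hadd : forall g x y, actX g (x + y) = actX g x + actX g y) x k :
  jX actX (x *+ k) = jX actX x *+ k.
Proof. by apply/ffunP => h; rewrite ffunMnE !ffunE actMn. Qed.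

Lemma jX_equiv (gT : finGroupType) n (actX : gT -> 'rV[int]_n -> 'rV[int]_n)
  (HM : forall g h x, actX (g * h)%g x = actX g (actX h x)) g x :
  indAct g (jX actX x) = jX actX (actX g x).
Proof. by apply/ffunP => h; rewrite !ffunE HM. Qed.

Lemma mxMn_entry (m n : nat) (A : 'M[int]_(m, n)) k i j : (A *+ k) i j = A i j *+ k.
Proof. by elim: k => [|k IH]; rewrite ?mulr0n ?mxE // !mulrS mxE IH. Qed.

Lemma rv_Mn_inj n (a b : 'rV[int]_n) k : (0 < k)%N -> a *+ k = b *+ k -> a = b.
Proof.
move=> k0 e; apply/matrixP => i j; have := congr1 (fun M : 'rV[int]_n => M i j) e => /=.
rewrite !mxMn_entry => /eqP; rewrite -subr_eq0 -mulrnBl mulrn_eq0.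
by rewrite eqn0Ngt k0 /= subr_eq0 => /eqP.
Qed.

Lemma int_Mn_eq0 (a : int) k : (0 < k)%N -> a *+ k = 0 -> a = 0.
Proof. by move=> k0 /eqP; rewrite mulrn_eq0 eqn0Ngt k0 /= => /eqP. Qed.

Lemma jX_tors (gT : finGroupType) n (actX : gT -> 'rV[int]_n -> 'rV[int]_n)
  (Hadd : forall g x y, actX g (x + y) = actX g x + actX g y)
  (H1 : forall x, actX 1%g x = x) (f : IndX gT n) k y :
  (0 < k)%N -> f *+ k = jX actX y -> f = jX actX (f 1%g).
Proof.
move=> k0 e; have e1 : f 1%g *+ k = y.
  by have := congr1 (fun F : IndX gT n => F 1%g) e; rewrite /= ffunMnE ffunE H1.
apply/ffunP => h; rewrite ffunE; apply: (@rv_Mn_inj n _ _ k k0).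
by have := congr1 (fun F : IndX gT n => F h) e; rewrite /= ffunMnE ffunE -e1 actMn.
Qed.

Lemma XQ_jX (gT : finGroupType) n (actX : gT -> 'rV[int]_n -> 'rV[int]_n)
  (Hadd : forall g x y, actX g (x + y) = actX g x + actX g y)
  (HM : forall g h x, actX (g * h)%g x = actX g (actX h x)) (I : {group gT}) x :
  XQ actX I (jX actX x).
Proof.
move=> g gI; exists (actX g x - x).
by rewrite jX_equiv // jXD // jXN.
Qed.

Lemma XQ_add (gT : finGroupType) n (actX : gT -> 'rV[int]_n -> 'rV[int]_n)
  (Hadd : forall g x y, actX g (x + y) = actX g x + actX g y) (I : {group gT}) f f' :
  XQ actX I f -> XQ actX I f' -> XQ actX I (f + f').
Proof.
move=> hf hf' g gI; have [x hx] := hf g gI; have [y hy] := hf' g gI.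
exists (x + y); rewrite jXD // -hx -hy indActD.
by rewrite opprD !addrA; congr (_ + _); rewrite addrAC.
Qed.

Lemma XQ0 (gT : finGroupType) n (actX : gT -> 'rV[int]_n -> 'rV[int]_n)
  (Hadd : forall g x y, actX g (x + y) = actX g x + actX g y) (I : {group gT}) :
  XQ actX I 0.
Proof. by move=> g gI; exists 0; rewrite indAct0 subrr jX0. Qed.

Lemma XQ_Mn (gT : finGroupType) n (actX : gT -> 'rV[int]_n -> 'rV[int]_n)
  (Hadd : forall g x y, actX g (x + y) = actX g x + actX g y) (I : {group gT}) f k :
  XQ actX I f -> XQ actX I (f *+ k).
Proof.
move=> hf; elim: k => [|k IH]; first by rewrite mulr0n; apply: XQ0.
by rewrite mulrS; apply: XQ_add.
Qed.

Lemma partA (gT : finGroupType) (I : {group gT}) (n : nat)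
  (actX : gT -> 'rV[int]_n -> 'rV[int]_n)
  (Hadd : forall g x y, actX g (x + y) = actX g x + actX g y)
  (H1 : forall x, actX 1%g x = x)
  (HM : forall g h x, actX (g * h)%g x = actX g (actX h x)) :
  H1_vanishes I (@indAct gT n) (XQ actX I).
Proof.
move=> c [cS cM].
have c1 : c 1%g = 0.
  have := cM 1%g 1%g (group1 I) (group1 I); rewrite mulg1 indAct1 => h.
  by apply: (addrI (c 1%g)); rewrite addr0 -h.
have cjX : forall g, g \in I -> c g = jX actX (c g 1%g).
  move=> g gI.
  have cl : forall k, exists y, c (g ^+ k)%g = c g *+ k + jX actX y.
    elim=> [|k [y IH]]; first by exists 0; rewrite expg0 c1 mulr0n add0r jX0.
    have [z hz] := cS g gI g gI.
    have hz' : indAct g (c g) = c g + jX actX z by rewrite -hz addrC subrK.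
    exists (z *+ k + actX g y).
    rewrite expgS cM // ?groupX // IH indActD indActMn jX_equiv // hz'.
    by rewrite mulrnDl jXD // jXMn // mulrS !addrA.
  have [y hy] := cl #[g]%g.
  rewrite expg_order c1 in hy.
  apply: (@jX_tors _ _ _ Hadd H1 _ #[g]%g (- y)); first exact: order_gt0.
  by apply/eqP; rewrite jXN // -addr_eq0 -hy.
pose m0 : IndX gT n :=
  [ffun h => c ((repr (h *: I)%g)^-1 * h)%g (repr (h *: I)%g)].
have key : forall g, g \in I -> indAct g m0 - m0 = c g.
  move=> g gI; apply/ffunP => h; rewrite !ffunE.
  have ehg : ((h * g) *: I)%g = (h *: I)%g by rewrite lcosetM lcoset_id.
  rewrite ehg; set s := repr (h *: I)%g.
  have tI : (s^-1 * h)%g \in I.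
    have : s \in (h *: I)%g by apply: mem_repr (lcoset_refl I h).
    by rewrite mem_lcoset => /groupVr; rewrite invMg invgK.
  rewrite mulgA cM // ffunE ffunE mulKVg.
  by rewrite [_ + c g h]addrC addrK.
exists m0; split.
  by move=> g gI; exists (c g 1%g); rewrite key // -cjX.
by move=> g gI; rewrite key.
Qed.

Lemma dual_Mn (gT : finGroupType) n (actX : gT -> 'rV[int]_n -> 'rV[int]_n)
  (Hadd : forall g x y, actX g (x + y) = actX g x + actX g y) (I : {group gT})
  (psi : IndX gT n -> int) v k :
  dual_on (XQ actX I) psi -> XQ actX I v -> psi (v *+ k) = psi v *+ k.
Proof.
move=> hpsi vQ; elim: k => [|k IH].
  by rewrite !mulr0n; apply: (addrI (psi 0)); rewrite -hpsi ?addr0 //; apply: XQ0.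
by rewrite !mulrS hpsi ?IH //; apply: XQ_Mn.
Qed.

Lemma partB2 (gT : finGroupType) (I : {group gT}) (n : nat)
  (actX : gT -> 'rV[int]_n -> 'rV[int]_n)
  (Hadd : forall g x y, actX g (x + y) = actX g x + actX g y)
  (H1 : forall x, actX 1%g x = x)
  (HM : forall g h x, actX (g * h)%g x = actX g (actX h x)) psi :
  XP_dual actX I psi ->
  coinv_zero I (@indAct gT n) (XQ actX I) psi ->
  eq_on (XQ actX I) psi (fun _ => 0).
Proof.
move=> [hpsi hpsi0] [k [gs [phis [Hg Hs]]]] v vQ.
pose w := \sum_(j in I) indAct j v.
have cA : forall s : seq gT, all (fun j => j \in I) s ->
    exists x, \sum_(j <- s) indAct j v = v *+ size s + jX actX x.
  elim=> [|a s IH] /=; first by exists 0; rewrite big_nil mulr0n jX0 // addr0.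
  move=> /andP [aI /IH [x hx]]; have [y hy] := vQ a aI.
  exists (y + x); rewrite big_cons hx jXD // mulrS.
  have -> : indAct a v = v + jX actX y by rewrite -hy addrC subrK.
  by rewrite !addrA; congr (_ + _); rewrite addrAC.
have [x hx] : exists x, w = v *+ #|I| + jX actX x.
  rewrite /w -big_enum cardE; apply: cA; by apply/allP => j; rewrite mem_enum.
have cB : forall g, g \in I -> indAct g w = w.
  move=> g gI; rewrite /w indAct_sum (reindex (fun j => (g^-1 * j)%g)) /=; last first.
    by exists (fun j => (g * j)%g) => j _; rewrite ?mulKVg ?mulKg.
  apply: eq_big => j; first by rewrite groupMl ?groupV.
  by move=> _; rewrite -indActM mulKVg.
have wQ : XQ actX I w.
  by move=> g gI; exists 0; rewrite cB // subrr jX0.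
have pw : psi w = 0.
  rewrite Hs //; apply: big1 => i _; rewrite /dact cB ?subrr //.
  by apply: groupVr; have [] := Hg i (ltn_ord i).
have : psi v *+ #|I| = 0.
  rewrite -(@dual_Mn _ _ _ Hadd _ _ _ _ hpsi vQ) -[RHS]pw hx hpsi ?hpsi0 ?addr0 //.
    by apply: XQ_Mn.
  exact: XQ_jX.
by apply: int_Mn_eq0; apply: cardG_gt0.
Qed.
Theorem mainTheorem10 (gT : finGroupType) (I : {group gT}) (n : nat)
  (actX : gT -> 'rV[int]_n -> 'rV[int]_n)
  (* gT = Gal(L/K), I = inertia subgroup (normal), X*(T) = Z^n *)
  (HI : (I <| [set: gT])%g)
  (Hadd : forall g x y, actX g (x + y) = actX g x + actX g y)
  (H1 : forall x, actX 1%g x = x)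
  (HM : forall g h x, actX (g * h)%g x = actX g (actX h x))
  (* L is the minimal splitting field: Gal(L/K) acts faithfully *)
  (Hfaith : forall g, (forall x, actX g x = x) -> g = 1%g) :
  (* (a) H^1(I, X*(Q)) = 0 *)
  H1_vanishes I (@indAct gT n) (XQ actX I) /\
  (* (b) 0 -> X_*(P) -> X_*(Q)_I -> X_*(T)_I -> 0 exact, G-equivariant *)
  [/\ (* I acts trivially on X_*(P) *)
      (forall psi g, XP_dual actX I psi -> g \in I ->
         eq_on (XQ actX I) (dact (@indAct gT n) g psi) psi),
      (* X_*(P) -> X_*(Q)_I is injective *)
      (forall psi, XP_dual actX I psi ->
         coinv_zero I (@indAct gT n) (XQ actX I) psi ->
         eq_on (XQ actX I) psi (fun _ => 0)),
      (* X_*(Q)_I -> X_*(T)_I is well defined and G-equivariant, and the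
         composite X_*(P) -> X_*(T)_I is zero *)
      [/\ forall phi, dual_on (XQ actX I) phi ->
            coinv_zero I (@indAct gT n) (XQ actX I) phi ->
            coinv_zero I actX (fun _ => True) (toXT actX phi),
          forall phi g, dual_on (XQ actX I) phi ->
            toXT actX (dact (@indAct gT n) g phi) =1 dact actX g (toXT actX phi)
        & forall psi, XP_dual actX I psi ->
            coinv_zero I actX (fun _ => True) (toXT actX psi)],
      (* exactness at X_*(Q)_I *)
      (forall phi, dual_on (XQ actX I) phi ->
         coinv_zero I actX (fun _ => True) (toXT actX phi) ->
         exists psi, XP_dual actX I psi /\
           coinv_zero I (@indAct gT n) (XQ actX I) (fun v => phi v - psi v))
    & (* X_*(Q)_I -> X_*(T)_I is surjective *)
      (forall alpha, dual_on (fun _ => True) alpha ->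
         exists phi, dual_on (XQ actX I) phi /\
           coinv_zero I actX (fun _ => True)
             (fun x => alpha x - toXT actX phi x))].
Proof.
split; first exact: partA.
split.
- move=> psi g [hpsi hpsi0] gI v vQ; rewrite /dact.
  have [x hx] := vQ g^-1%g (groupVr gI).
  have -> : indAct g^-1%g v = v + jX actX x by rewrite -hx addrC subrK.
  by rewrite hpsi ?hpsi0 ?addr0 //; exact: XQ_jX.
- exact: partB2.
- split.
  + move=> phi hphi [k [gs [phis [Hg Hs]]]].
    exists k, gs, (fun i x => phis i (jX actX x)); split.
      move=> i ik; have [gI hp] := Hg i ik; split => // a b _ _.
      by rewrite jXD // hp //; exact: XQ_jX.
    move=> x _; rewrite /toXT Hs; last exact: XQ_jX.
    by apply: eq_bigr => i _; rewrite /dact jX_equiv.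
  + by move=> phi g _ x; rewrite /toXT /dact jX_equiv.
  + move=> psi [_ hpsi0]; exists 0%N, (fun _ => 1%g), (fun _ _ => 0); split => //.
    by move=> x _; rewrite big_ord0 /toXT hpsi0.
- move=> phi hphi [k [gs [alphas [Hg Hs]]]].
  pose beta i (f : IndX gT n) := alphas i (f 1%g).
  pose psi v := phi v - \sum_(i < k) (beta i (indAct (gs i)^-1%g v) - beta i v).
  have hbeta : forall i a b, (i < k)%N -> beta i (a + b) = beta i a + beta i b.
    by move=> i a b ik; have [_ ha] := Hg i ik; rewrite /beta ffunE ha.
  exists psi; split.
    split.
      move=> a b aQ bQ; rewrite /psi hphi //.
      have -> : \sum_(i < k) (beta i (indAct (gs i)^-1 (a + b)) - beta i (a + b))
        = \sum_(i < k) (beta i (indAct (gs i)^-1 a) - beta i a)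
          + \sum_(i < k) (beta i (indAct (gs i)^-1 b) - beta i b).
        rewrite -big_split; apply: eq_bigr => i _ /=.
        rewrite indActD !hbeta //; by rewrite opprD !addrA; congr (_ + _); rewrite addrAC -!addrA [X in _ + X]addrC.
      by rewrite opprD !addrA; congr (_ + _); rewrite addrAC.
    move=> x; rewrite /psi -/(toXT actX phi x) (Hs x Logic.I); apply/eqP; rewrite subr_eq0; apply/eqP.
    by apply: eq_bigr => i _; rewrite /beta !ffunE mul1g H1.
  exists k, gs, beta; split.
    by move=> i ik; have [gI _] := Hg i ik; split => // a b _ _; exact: hbeta.
  by move=> v vQ; rewrite /psi opprB addrC subrK.
- move=> alpha halpha; exists (fun f : IndX gT n => alpha (f 1%g)); split.
    by move=> a b _ _; rewrite ffunE halpha.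
  exists 0%N, (fun _ => 1%g), (fun _ _ => 0); split => //.
  by move=> x _; rewrite big_ord0 /toXT ffunE H1 subrr.
Qed.
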